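(* Let $n\ge3$ and let $\Phi:\mathfrak{B}([n])^{op}\to\mathbf{Gpd}$ be a contravariant functor. The restriction functor $\gamma_{n-3}:\operatorname{2lim}_{\mathfrak{B}([n])}\Phi\to\operatorname{2lim}_{\mathfrak{B}([n],n-3)}\Phi$ is an equivalence of categories, where $\mathfrak{B}([n],n-3)$ is the poset of subsets $S\subseteq[n]$ with $n-3\le|S|\le n-1$.
   Context: $[n]=\{1,\dots,n\}$; $\mathfrak{B}([n])$ is the poset of proper subsets of $[n]$ ordered by inclusion. For $U\subseteq V$, $\Phi_{U,V}:\Phi(V)\to\Phi(U)$. For a functor $\Psi:I^{op}\to\mathbf{Gpd}$ on a poset, $\operatorname{2lim}\Psi$ is the groupoid whose objects are families $(a_U,\alpha_{U,V})$ with $a_U\in\Psi(U)$ and isomorphisms $\alpha_{U,V}:\Psi_{U,V}(a_V)\to a_U$ for $U\le V$ satisfying $\alpha_{U,U}=\mathrm{id}$ and $\alpha_{U,W}=\alpha_{U,V}\circ\Psi_{U,V}(\alpha_{V,W})$, and whose morphisms are families $g_U:a_U\to b_U$ with $g_U\circ\alpha_{U,V}=\beta_{U,V}\circ\Psi_{U,V}(g_V)$. *)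

(* Defs.v *)
From HB Require Import structures.
From mathcomp Require Import all_boot.
Set Implicit Arguments. Unset Strict Implicit. Unset Printing Implicit Defensive.

Record Cat := {
  obj :> Type;
  hom : obj -> obj -> Type;
  idc : forall x, hom x x;
  comp : forall x y z, hom y z -> hom x y -> hom x z }.
Arguments hom {c} x y.
Arguments idc {c} x.
Arguments comp {c x y z} f g.

Definition eq_hom (C : Cat) (x y : C) (e : x = y) : hom x y :=
  match e in _ = y' return hom x y' with erefl => idc x end.

Record is_category (C : Cat) : Prop := {
  cat_assoc : forall (x y z w : C) (f : hom z w) (g : hom y z) (h : hom x y),
      comp f (comp g h) = comp (comp f g) h;
  cat_idl : forall (x y : C) (f : hom x y), comp (idc y) f = f;
  cat_idr : forall (x y : C) (f : hom x y), comp f (idc x) = f }.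

Definition is_groupoid (C : Cat) : Prop :=
  is_category C /\
  forall (x y : C) (f : hom x y), exists g : hom y x,
      comp g f = idc x /\ comp f g = idc y.

Record Functor (C D : Cat) := {
  fobj :> C -> D;
  fmap : forall x y : C, hom x y -> hom (fobj x) (fobj y) }.
Arguments fmap {C D} f {x y} _.

Record is_functor (C D : Cat) (F : Functor C D) : Prop := {
  fun_id : forall x : C, fmap F (idc x) = idc (F x);
  fun_comp : forall (x y z : C) (f : hom y z) (g : hom x y),
      fmap F (comp f g) = comp (fmap F f) (fmap F g) }.

Definition is_equivalence (C D : Cat) (F : Functor C D) : Prop :=
  exists G : Functor D C, is_functor G /\
  (exists (eta : forall x : C, hom x (G (F x))) (eta' : forall x : C, hom (G (F x)) x),
     (forall (x x' : C) (f : hom x x'),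
         comp (eta x') f = comp (fmap G (fmap F f)) (eta x)) /\
     (forall x : C, comp (eta' x) (eta x) = idc x /\ comp (eta x) (eta' x) = idc (G (F x)))) /\
  (exists (eps : forall y : D, hom (F (G y)) y) (eps' : forall y : D, hom y (F (G y))),
     (forall (y y' : D) (f : hom y y'),
         comp (eps y') (fmap F (fmap G f)) = comp f (eps y)) /\
     (forall y : D, comp (eps' y) (eps y) = idc (F (G y)) /\ comp (eps y) (eps' y) = idc y)).

(* ps_res h : Psi(V) -> Psi(U) for h : U <= V; ps_id / ps_comp witness the
   (strict) functoriality on objects: Psi_{U,U} = id, Psi_{U,W} = Psi_{U,V} o Psi_{V,W}. *)
Record GpdPresheaf (I : Type) (le : I -> I -> bool) := {
  ps_cat : I -> Cat;
  ps_res : forall U V, le U V -> Functor (ps_cat V) (ps_cat U);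
  ps_id : forall U (h : le U U) (x : ps_cat U), ps_res h x = x;
  ps_comp : forall U V W (hUV : le U V) (hVW : le V W) (hUW : le U W) (x : ps_cat W),
      ps_res hUW x = ps_res hUV (ps_res hVW x) }.
Arguments GpdPresheaf : clear implicits.
Arguments ps_cat {I le} g U.
Arguments ps_res {I le} g {U V} h.
Arguments ps_id {I le} g {U} h x.
Arguments ps_comp {I le} g {U V W} hUV hVW hUW x.

Record is_presheaf (I : Type) (le : I -> I -> bool) (P : GpdPresheaf I le) : Prop := {
  ps_gpd : forall U, is_groupoid (ps_cat P U);
  ps_fun : forall U V (h : le U V), is_functor (ps_res P h);
  ps_id_hom : forall U (h : le U U) (x y : ps_cat P U) (f : hom x y),
      comp (eq_hom (ps_id P h y)) (fmap (ps_res P h) f) = comp f (eq_hom (ps_id P h x));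
  ps_comp_hom : forall U V W (hUV : le U V) (hVW : le V W) (hUW : le U W)
      (x y : ps_cat P W) (f : hom x y),
      comp (eq_hom (ps_comp P hUV hVW hUW y)) (fmap (ps_res P hUW) f)
      = comp (fmap (ps_res P hUV) (fmap (ps_res P hVW) f)) (eq_hom (ps_comp P hUV hVW hUW x)) }.

Section TwoLim.
Variables (I : Type) (le : I -> I -> bool) (P : GpdPresheaf I le).

Record tlim_obj := {
  tl_a : forall U, ps_cat P U;
  tl_al : forall U V (h : le U V), hom (ps_res P h (tl_a V)) (tl_a U);
  tl_id : forall U (h : le U U), tl_al h = eq_hom (ps_id P h (tl_a U));
  tl_coc : forall U V W (hUV : le U V) (hVW : le V W) (hUW : le U W),
      tl_al hUW = comp (tl_al hUV)
                       (comp (fmap (ps_res P hUV) (tl_al hVW))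
                             (eq_hom (ps_comp P hUV hVW hUW (tl_a W)))) }.

Record tlim_hom (A B : tlim_obj) := {
  th_g : forall U, hom (tl_a A U) (tl_a B U);
  th_nat : forall U V (h : le U V),
      comp (th_g U) (tl_al A h) = comp (tl_al B h) (fmap (ps_res P h) (th_g V)) }.

Hypothesis HP : is_presheaf P.

Lemma tlim_id_nat (A : tlim_obj) U V (h : le U V) :
  comp (idc (tl_a A U)) (tl_al A h)
  = comp (tl_al A h) (fmap (ps_res P h) (idc (tl_a A V))).
Proof.
have [[Hc _] Hf] := (ps_gpd HP U, ps_fun HP h).
by rewrite (fun_id Hf) (cat_idl Hc) (cat_idr Hc).
Qed.

Definition tlim_idh (A : tlim_obj) : tlim_hom A A :=
  {| th_g := fun U => idc (tl_a A U); th_nat := @tlim_id_nat A |}.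

Lemma tlim_comp_nat (A B C : tlim_obj) (g : tlim_hom B C) (g' : tlim_hom A B) U V (h : le U V) :
  comp (comp (th_g g U) (th_g g' U)) (tl_al A h)
  = comp (tl_al C h) (fmap (ps_res P h) (comp (th_g g V) (th_g g' V))).
Proof.
have [[Hc _] Hf] := (ps_gpd HP U, ps_fun HP h).
rewrite -(cat_assoc Hc) (th_nat g') (cat_assoc Hc) (th_nat g).
by rewrite -(cat_assoc Hc) (fun_comp Hf).
Qed.

Definition tlim_comph (A B C : tlim_obj) (g : tlim_hom B C) (g' : tlim_hom A B) : tlim_hom A C :=
  {| th_g := fun U => comp (th_g g U) (th_g g' U); th_nat := tlim_comp_nat g g' |}.

Definition tlim : Cat :=
  {| obj := tlim_obj; hom := tlim_hom; idc := tlim_idh; comp := tlim_comph |}.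
End TwoLim.

Section Restrict.
Variables (I : Type) (le : I -> I -> bool) (P : GpdPresheaf I le) (Q : pred I).

Definition sub_le (x y : {U : I | Q U}) : bool := le (sval x) (sval y).

Definition restrict_ps : GpdPresheaf {U : I | Q U} sub_le :=
  {| ps_cat := fun x => ps_cat P (sval x);
     ps_res := fun x y h => ps_res P (h : le (sval x) (sval y));
     ps_id := fun x h a => ps_id P (h : le (sval x) (sval x)) a;
     ps_comp := fun x y z h1 h2 h3 a => ps_comp P (h1 : le (sval x) (sval y))
                  (h2 : le (sval y) (sval z)) (h3 : le (sval x) (sval z)) a |}.

Lemma restrict_ok (HP : is_presheaf P) : is_presheaf restrict_ps.
Proof.
case: HP => H1 H2 H3 H4; split.
- by move=> x; exact: H1.
- by move=> x y h; exact: H2.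
- by move=> x h a b f; exact: H3.
- by move=> x y z h1 h2 h3 a b f; exact: H4.
Qed.

Definition restr_obj (A : tlim_obj P) : tlim_obj restrict_ps :=
  @Build_tlim_obj _ _ restrict_ps (fun x => tl_a A (sval x))
     (fun x y h => tl_al A (h : le (sval x) (sval y)))
     (fun x h => tl_id A (h : le (sval x) (sval x)))
     (fun x y z h1 h2 h3 => tl_coc A h1 h2 h3).

Definition restr_hom (A B : tlim_obj P) (g : tlim_hom A B) :
    tlim_hom (restr_obj A) (restr_obj B) :=
  @Build_tlim_hom _ _ restrict_ps (restr_obj A) (restr_obj B) (fun x => th_g g (sval x))
     (fun x y h => th_nat g (h : le (sval x) (sval y))).

Definition restrict_functor (HP : is_presheaf P) :
    Functor (tlim HP) (tlim (restrict_ok HP)) :=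
  @Build_Functor (tlim HP) (tlim (restrict_ok HP)) restr_obj restr_hom.
End Restrict.

(* [n] = {1,...,n} is modelled by 'I_n = {0,...,n-1}. *)
Definition Bn (n : nat) := {U : {set 'I_n} | U \proper [set: 'I_n]}.
Definition Bn_le (n : nat) (U V : Bn n) : bool := sval U \subset sval V.

Definition Bnk_pred (n k : nat) : pred (Bn n) := fun U => k <= #|sval U|.
Arguments Bn_le : clear implicits.
Arguments Bnk_pred : clear implicits.

(* Main.v *)
From Pilot Require Import Defs.
From HB Require Import structures.
From mathcomp Require Import all_boot.
From Stdlib Require Import ProofIrrelevance FunctionalExtensionality ClassicalEpsilon.
Import Pilot.Defs.
Set Implicit Arguments. Unset Strict Implicit. Unset Printing Implicit Defensive.

Section Gen.
Variables (C : Cat) (HC : is_category C).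

Lemma eq_hom_comp (x y z : C) (e1 : y = z) (e2 : x = y) :
  comp (eq_hom e1) (eq_hom e2) = eq_hom (etrans e2 e1).
Proof. by case: z / e1; case: y / e2 => /=; rewrite (cat_idl HC). Qed.

Lemma eq_hom_pi (x y : C) (e e' : x = y) : eq_hom e = eq_hom e'.
Proof. by rewrite (proof_irrelevance _ e e'). Qed.

Lemma eq_hom_id (x : C) (e : x = x) : eq_hom e = idc x.
Proof. by rewrite (proof_irrelevance _ e erefl). Qed.

Lemma eq_hom_comp' (x y z w : C) (e1 : y = z) (e2 : x = y) (f : hom w x) :
  comp (eq_hom e1) (comp (eq_hom e2) f) = comp (eq_hom (etrans e2 e1)) f.
Proof. by rewrite (cat_assoc HC) eq_hom_comp. Qed.

Lemma eq_hom_swap (x y x' y' : C) (e1 : y = y') (e2 : x = x') (f : hom x y) (g : hom x' y') :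
  comp (eq_hom e1) f = comp g (eq_hom e2) ->
  comp f (eq_hom (esym e2)) = comp (eq_hom (esym e1)) g.
Proof.
case: y' / e1 g; case: x' / e2 => g /=.
by rewrite (cat_idl HC) (cat_idr HC) => ->; rewrite (cat_idl HC) (cat_idr HC).
Qed.
End Gen.

Lemma fmap_eq_hom (C D : Cat) (F : Functor C D) (HF : is_functor F) (x y : C) (e : x = y) :
  fmap F (eq_hom e) = eq_hom (f_equal F e).
Proof. by case: y / e; exact: (fun_id HF). Qed.

Section Gpd.
Variables (C : Cat) (HC : is_groupoid C).

Definition ginv (x y : C) (f : hom x y) : hom y x :=
  proj1_sig (constructive_indefinite_description _ (HC.2 x y f)).

Lemma ginvL (x y : C) (f : hom x y) : comp (ginv f) f = idc x.
Proof. rewrite /ginv; case: constructive_indefinite_description => g /= []; done. Qed.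
Lemma ginvR (x y : C) (f : hom x y) : comp f (ginv f) = idc y.
Proof. rewrite /ginv; case: constructive_indefinite_description => g /= []; done. Qed.

Let HC1 := HC.1.

Lemma ginv_uniq (x y : C) (f : hom x y) (g : hom y x) : comp g f = idc x -> g = ginv f.
Proof.
move=> H; rewrite -[g](cat_idr HC1) -(ginvR f) (cat_assoc HC1) H (cat_idl HC1) //.
Qed.

Lemma ginv_comp (x y z : C) (f : hom y z) (g : hom x y) :
  ginv (comp f g) = comp (ginv g) (ginv f).
Proof.
symmetry; apply: ginv_uniq.
by rewrite -(cat_assoc HC1) (cat_assoc HC1 (ginv f)) ginvL (cat_idl HC1) ginvL.
Qed.

Lemma ginvK (x y : C) (f : hom x y) : ginv (ginv f) = f.
Proof. by symmetry; apply: ginv_uniq; rewrite ginvR. Qed.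

Lemma ginv_eq_hom (x y : C) (e : x = y) : ginv (eq_hom e) = eq_hom (esym e).
Proof. by symmetry; apply: ginv_uniq; rewrite (eq_hom_comp HC1) eq_hom_id. Qed.

Lemma inv_sq (x y x' y' : C) (f : hom y y') (a : hom x y) (b : hom x x') (g : hom x' y') :
  comp f a = comp g b -> comp (ginv g) f = comp b (ginv a).
Proof.
move=> H.
rewrite -[comp (ginv g) f](cat_idr HC1) -(ginvR a) (cat_assoc HC1) -(cat_assoc HC1 (ginv g)) H.
by rewrite (cat_assoc HC1) ginvL (cat_idl HC1).
Qed.

Lemma comp_cancel_l (x y z : C) (f : hom y z) (g h : hom x y) :
  comp f g = comp f h -> g = h.
Proof.
move=> H; rewrite -[g](cat_idl HC1) -[h](cat_idl HC1) -(ginvL f).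
by rewrite -!(cat_assoc HC1) H.
Qed.

Lemma comp_cancel_r (x y z : C) (f : hom x y) (g h : hom y z) :
  comp g f = comp h f -> g = h.
Proof.
move=> H; rewrite -[g](cat_idr HC1) -[h](cat_idr HC1) -(ginvR f).
by rewrite !(cat_assoc HC1) H.
Qed.
End Gpd.

Lemma fmap_ginv (C D : Cat) (HC : is_groupoid C) (HD : is_groupoid D)
  (F : Functor C D) (HF : is_functor F) (x y : C) (f : hom x y) :
  fmap F (ginv HC f) = ginv HD (fmap F f).
Proof. by apply: ginv_uniq; rewrite -(fun_comp HF) ginvL (fun_id HF). Qed.

Lemma tlim_hom_eq (I : Type) (le : I -> I -> bool) (P : GpdPresheaf I le) (A B : tlim_obj P)
  (g g' : tlim_hom A B) : (forall U, th_g g U = th_g g' U) -> g = g'.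
Proof.
case: g => g gn; case: g' => g' gn' /= H.
have E := functional_extensionality_dep _ _ H; subst g'.
by rewrite (proof_irrelevance _ gn gn').
Qed.

Section TInv.
Variables (I : Type) (le : I -> I -> bool) (P : GpdPresheaf I le) (HP : is_presheaf P).
Lemma tinv_nat (A B : tlim_obj P) (g : tlim_hom A B) U V (h : le U V) :
  comp (ginv (ps_gpd HP U) (th_g g U)) (tl_al B h)
  = comp (tl_al A h) (fmap (ps_res P h) (ginv (ps_gpd HP V) (th_g g V))).
Proof.
rewrite (fmap_ginv (ps_gpd HP V) (ps_gpd HP U) (ps_fun HP h)).
apply: inv_sq; symmetry; exact: th_nat.
Qed.
Definition tinv (A B : tlim_obj P) (g : tlim_hom A B) : tlim_hom B A :=
  {| th_g := fun U => ginv (ps_gpd HP U) (th_g g U); th_nat := tinv_nat g |}.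
End TInv.

Section Main.
Variables (n : nat) (hn : 3 <= n).
Variables (Phi : GpdPresheaf (Bn n) (Bn_le n)) (HPhi : is_presheaf Phi).

Notation Q := (Bnk_pred n (n - 3)).
Notation J := {U : Bn n | Q U}.
Notation res := (ps_res Phi).
Notation PC := (ps_cat Phi).

Lemma le_pi (U V : Bn n) (h h' : Bn_le n U V) : h = h'.
Proof. exact: bool_irrelevance. Qed.

Lemma cA (U : Bn n) (x y z w : PC U) (f : hom z w) (g : hom y z) (h : hom x y) :
  comp f (comp g h) = comp (comp f g) h.
Proof. exact: (cat_assoc (ps_gpd HPhi U).1). Qed.
Lemma cL (U : Bn n) (x y : PC U) (f : hom x y) : comp (idc y) f = f.
Proof. exact: (cat_idl (ps_gpd HPhi U).1). Qed.
Lemma cR (U : Bn n) (x y : PC U) (f : hom x y) : comp f (idc x) = f.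
Proof. exact: (cat_idr (ps_gpd HPhi U).1). Qed.
Lemma eqC (U : Bn n) (x y z : PC U) (e1 : y = z) (e2 : x = y) :
  comp (eq_hom e1) (eq_hom e2) = eq_hom (etrans e2 e1).
Proof. exact: (eq_hom_comp (ps_gpd HPhi U).1). Qed.
Lemma fC U V (h : Bn_le n U V) (x y z : PC V) (f : hom y z) (g : hom x y) :
  fmap (res h) (comp f g) = comp (fmap (res h) f) (fmap (res h) g).
Proof. exact: (fun_comp (ps_fun HPhi h)). Qed.
Lemma fI U V (h : Bn_le n U V) (x : PC V) : fmap (res h) (idc x) = idc _.
Proof. exact: (fun_id (ps_fun HPhi h)). Qed.
Lemma fE U V (h : Bn_le n U V) (x y : PC V) (e : x = y) :
  fmap (res h) (eq_hom e) = eq_hom (f_equal (res h) e).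
Proof. exact: (fmap_eq_hom (ps_fun HPhi h)). Qed.

Definition inv U (x y : PC U) (f : hom x y) : hom y x := ginv (ps_gpd HPhi U) f.
Lemma invL U (x y : PC U) (f : hom x y) : comp (inv f) f = idc x.
Proof. exact: ginvL. Qed.
Lemma invR U (x y : PC U) (f : hom x y) : comp f (inv f) = idc y.
Proof. exact: ginvR. Qed.
Lemma fInv U V (h : Bn_le n U V) (x y : PC V) (f : hom x y) :
  fmap (res h) (inv f) = inv (fmap (res h) f).
Proof. exact: (fmap_ginv _ _ (ps_fun HPhi h)). Qed.
Lemma invC U (x y z : PC U) (f : hom y z) (g : hom x y) : inv (comp f g) = comp (inv g) (inv f).
Proof. exact: ginv_comp. Qed.
Lemma invE U (x y : PC U) (e : x = y) : inv (eq_hom e) = eq_hom (esym e).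
Proof. exact: ginv_eq_hom. Qed.
Lemma invS U (x y x' y' : PC U) (f : hom y y') (a : hom x y) (b : hom x x') (g : hom x' y') :
  comp f a = comp g b -> comp (inv g) f = comp b (inv a).
Proof. exact: inv_sq. Qed.
Lemma invK U (x y : PC U) (f : hom x y) : inv (inv f) = f.
Proof. exact: ginvK. Qed.

Section Gam.
Variable A : tlim_obj (restrict_ps Phi Q).

Definition gam (U : Bn n) (T V : J) (hUT : Bn_le n U (sval T)) (hTV : Bn_le n (sval T) (sval V))
  (hUV : Bn_le n U (sval V)) : hom (res hUV (tl_a A V)) (res hUT (tl_a A T)) :=
  comp (fmap (res hUT) (tl_al A (hTV : sub_le _ T V))) (eq_hom (ps_comp Phi hUT hTV hUV (tl_a A V))).

Lemma gam_coc (U : Bn n) (T S V : J) hUT hTS hSV hUS hTV hUV :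
  @gam U T V hUT hTV hUV = comp (@gam U T S hUT hTS hUS) (@gam U S V hUS hSV hUV).
Proof.
rewrite /gam /= (tl_coc A (hTS : sub_le _ T S) (hSV : sub_le _ S V) (hTV : sub_le _ T V)) /=.
rewrite !fC -!cA; congr comp.
rewrite [RHS]cA (ps_comp_hom HPhi) -cA; congr comp.
by rewrite fE eqC eqC; apply: eq_hom_pi.
Qed.

Lemma gam_res (U' U : Bn n) (T V : J) (hU'U : Bn_le n U' U) hUT hTV hUV hU'T hU'V :
  comp (fmap (res hU'U) (@gam U T V hUT hTV hUV)) (eq_hom (ps_comp Phi hU'U hUV hU'V (tl_a A V)))
  = comp (eq_hom (ps_comp Phi hU'U hUT hU'T (tl_a A T))) (@gam U' T V hU'T hTV hU'V).
Proof.
rewrite /gam fC -cA [RHS]cA (ps_comp_hom HPhi) -cA; congr comp.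
by rewrite fE !eqC; apply: eq_hom_pi.
Qed.

Lemma gam_self (T V : J) (hTT : Bn_le n (sval T) (sval T)) hTV :
  @gam (sval T) T V hTT hTV hTV
  = comp (eq_hom (esym (ps_id Phi hTT (tl_a A T)))) (tl_al A (hTV : sub_le _ T V)).
Proof.
apply: (@comp_cancel_l _ (ps_gpd HPhi _) _ _ _ (eq_hom (ps_id Phi hTT (tl_a A T)))).
rewrite /gam cA (ps_id_hom HPhi) cA eqC -cA eqC.
rewrite (eq_hom_id (etrans (esym _) _)) cL.
rewrite (@eq_hom_id _ _ (etrans (ps_comp Phi hTT hTV hTV (tl_a A V)) (ps_id Phi hTT _))) cR //.
Qed.

Definition del (U : Bn n) (T V W : J) hUT hTV hUV hTW hUW :
   hom (res hUW (tl_a A W)) (res hUV (tl_a A V)) :=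
  comp (inv (@gam U T V hUT hTV hUV)) (@gam U T W hUT hTW hUW).

Lemma del_indep (U : Bn n) (T' T V W : J) hUT' (hT'T : Bn_le n (sval T') (sval T)) hUT hTV hTW hT'V hT'W hUV hUW :
  @del U T' V W hUT' hT'V hUV hT'W hUW = @del U T V W hUT hTV hUV hTW hUW.
Proof.
rewrite /del (gam_coc hUT' hT'T hTV hUT) (gam_coc hUT' hT'T hTW hUT) invC -cA; congr comp.
by rewrite cA invL cL.
Qed.

Lemma del_res (U' U : Bn n) (T V W : J) (hU'U : Bn_le n U' U) hUT hTV hUV hTW hUW hU'T hU'V hU'W :
  comp (fmap (res hU'U) (@del U T V W hUT hTV hUV hTW hUW))
       (eq_hom (ps_comp Phi hU'U hUW hU'W (tl_a A W)))
  = comp (eq_hom (ps_comp Phi hU'U hUV hU'V (tl_a A V))) (@del U' T V W hU'T hTV hU'V hTW hU'W).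
Proof.
rewrite /del fC fInv -cA (gam_res hU'U) !cA; congr comp.
congr comp; apply: invS; symmetry; exact: gam_res.
Qed.

Lemma del_self (T V W : J) (hTT : Bn_le n (sval T) (sval T)) hTV hTW :
  @del (sval T) T V W hTT hTV hTV hTW hTW
  = comp (inv (tl_al A (hTV : sub_le _ T V))) (tl_al A (hTW : sub_le _ T W)).
Proof.
rewrite /del !gam_self invC -cA (cA (inv (eq_hom _))) invL cL //.
Qed.

Lemma del_VV (U : Bn n) (T V : J) hUT hTV hUV hTV' hUV' :
  @del U T V V hUT hTV hUV hTV' hUV'
  = eq_hom (f_equal (fun h => res h (tl_a A V)) (le_pi hUV' hUV)).
Proof.
rewrite (le_pi hTV' hTV) (le_pi hUV' hUV) /del invL eq_hom_id //.
Qed.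

Lemma del_trans (U : Bn n) (T V W X : J) hUT hTV hUV hTW hUW hTX hUX :
  comp (@del U T V W hUT hTV hUV hTW hUW) (@del U T W X hUT hTW hUW hTX hUX)
  = @del U T V X hUT hTV hUV hTX hUX.
Proof. by rewrite /del -cA (cA (gam _ _ _)) invR cL. Qed.
End Gam.

Lemma gam_g (A B : tlim_obj (restrict_ps Phi Q)) (g : tlim_hom A B)
   (U : Bn n) (T V : J) hUT hTV hUV :
  comp (fmap (res hUT) (th_g g T)) (@gam A U T V hUT hTV hUV)
  = comp (@gam B U T V hUT hTV hUV) (fmap (res hUV) (th_g g V)).
Proof.
rewrite /gam cA -fC (th_nat g (hTV : sub_le _ T V)) fC -cA.
by rewrite -[RHS]cA (ps_comp_hom HPhi).
Qed.

Lemma del_g (A B : tlim_obj (restrict_ps Phi Q)) (g : tlim_hom A B)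
   (U : Bn n) (T V W : J) hUT hTV hUV hTW hUW :
  comp (fmap (res hUV) (th_g g V)) (@del A U T V W hUT hTV hUV hTW hUW)
  = comp (@del B U T V W hUT hTV hUV hTW hUW) (fmap (res hUW) (th_g g W)).
Proof.
by rewrite /del cA -(invS (gam_g g hUT hTV hUV)) -cA -[RHS]cA (gam_g g hUT hTW hUW).
Qed.

Lemma del_restr (A : tlim_obj Phi) (U : Bn n) (T V W : J) hUT hTV hUV hTW hUW :
  @del (restr_obj Q A) U T V W hUT hTV hUV hTW hUW
  = comp (inv (tl_al A hUV)) (tl_al A hUW).
Proof.
have E : forall X (hTX : Bn_le n (sval T) (sval X)) hUX,
    @gam (restr_obj Q A) U T X hUT hTX hUX = comp (inv (tl_al A hUT)) (tl_al A hUX).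
  move=> X hTX hUX; rewrite (tl_coc A hUT hTX hUX) cA invL cL //.
rewrite /del !E invC invK -cA (cA (tl_al A hUT)) invR cL //.
Qed.

Definition Sset (x y z : 'I_n) : {set 'I_n} := ~: [set x; y; z].

Lemma S_proper x y z : Sset x y z \proper [set: 'I_n].
Proof.
rewrite properT; apply/negP => /eqP E.
have : x \in Sset x y z by rewrite E inE.
by rewrite !inE eqxx.
Qed.

Definition Bs x y z : Bn n := exist _ (Sset x y z) (S_proper x y z).

Lemma S_Q x y z : Q (Bs x y z).
Proof.
rewrite /Bnk_pred /= /Sset.
have -> : #|~: [set x; y; z]| = n - #|[set x; y; z]|.
  by have E := cardsC [set x; y; z]; rewrite card_ord in E; rewrite -[X in X - _]E addKn.
apply: leq_sub2l; rewrite cardsU cards1; apply: leq_trans (leq_subr _ _) _.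
by rewrite cards2; case: (x != y).
Qed.

Definition JS x y z : J := exist _ (Bs x y z) (S_Q x y z).

Lemma sub_JS (U : Bn n) x y z : x \notin sval U -> y \notin sval U -> z \notin sval U ->
  Bn_le n U (sval (JS x y z)).
Proof.
move=> hx hy hz; apply/subsetP => w hw; rewrite /= /Sset !inE.
have H : forall a, a \notin sval U -> w != a.
  by move=> a ha; apply/eqP => E; subst; rewrite hw in ha.
by rewrite (negbTE (H _ hx)) (negbTE (H _ hy)) (negbTE (H _ hz)).
Qed.

Lemma JS_le x y z x' y' z' : [set x'; y'; z'] \subset [set x; y; z] ->
  Bn_le n (sval (JS x y z)) (sval (JS x' y' z')).
Proof. by move=> H; rewrite /Bn_le /= /Sset setCS. Qed.

Lemma leT (U V W : Bn n) : Bn_le n U V -> Bn_le n V W -> Bn_le n U W.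
Proof. exact: subset_trans. Qed.

Lemma notin_le (U V : Bn n) x : Bn_le n U V -> x \notin sval V -> x \notin sval U.
Proof. by move=> /subsetP H; apply: contra; apply: H. Qed.

Lemma exU (U : Bn n) : exists x, x \notin sval U.
Proof.
case: U => S /=; rewrite properT => HS.
case: (pickP (fun x => x \notin S)) => [x Hx|H]; first by exists x.
case/negP: HS; apply/eqP; apply/setP => x; rewrite inE.
by have := H x; rewrite /= => /negbFE ->.
Qed.

Definition xU (U : Bn n) : 'I_n := xchoose (exU U).
Lemma xUP (U : Bn n) : xU U \notin sval U.
Proof. exact: (xchooseP (exU U)). Qed.

Definition MU (U : Bn n) : J := JS (xU U) (xU U) (xU U).
Definition hM (U : Bn n) : Bn_le n U (sval (MU U)) := sub_JS (xUP U) (xUP U) (xUP U).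

Ltac setsub := apply/subsetP => w; rewrite !inE => /orP [/orP []|] /eqP ->; by rewrite eqxx ?orbT.
Lemma ss1 (x y : 'I_n) : [set x; x; x] \subset [set x; y; y]. Proof. setsub. Qed.
Lemma ss2 (x y : 'I_n) : [set y; y; y] \subset [set x; y; y]. Proof. setsub. Qed.
Lemma ss3 (x y z : 'I_n) : [set x; y; y] \subset [set x; y; z]. Proof. setsub. Qed.
Lemma ss4 (x y z : 'I_n) : [set y; z; z] \subset [set x; y; z]. Proof. setsub. Qed.
Lemma ss5 (x y z : 'I_n) : [set x; z; z] \subset [set x; y; z]. Proof. setsub. Qed.

Section GA.
Variable A : tlim_obj (restrict_ps Phi Q).

Definition GA_a (U : Bn n) : PC U := res (hM U) (tl_a A (MU U)).

Definition GA_al (U U' : Bn n) (h : Bn_le n U U') : hom (res h (GA_a U')) (GA_a U) :=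
  let hx' := notin_le h (xUP U') in
  comp (@del A U (JS (xU U) (xU U') (xU U')) (MU U) (MU U')
    (sub_JS (xUP U) hx' hx')
    (JS_le (ss1 (xU U) (xU U')))
    (hM U)
    (JS_le (ss2 (xU U) (xU U')))
    (sub_JS hx' hx' hx'))
  (eq_hom (esym (ps_comp Phi h (hM U') (sub_JS hx' hx' hx') (tl_a A (MU U'))))).

Lemma del_res' (U' U : Bn n) (T V W : J) (hU'U : Bn_le n U' U) hUT hTV hUV hTW hUW hU'T hU'V hU'W :
  fmap (res hU'U) (@del A U T V W hUT hTV hUV hTW hUW)
  = comp (eq_hom (ps_comp Phi hU'U hUV hU'V (tl_a A V)))
      (comp (@del A U' T V W hU'T hTV hU'V hTW hU'W)
            (eq_hom (esym (ps_comp Phi hU'U hUW hU'W (tl_a A W))))).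
Proof.
apply: (@comp_cancel_r _ (ps_gpd HPhi U') _ _ _ (eq_hom (ps_comp Phi hU'U hUW hU'W (tl_a A W)))).
rewrite (del_res A hU'U _ _ _ _ _ hU'T hU'V hU'W) -!cA eqC eq_hom_id cR //.
Qed.

Lemma GA_id_gen (U : Bn n) (T V : J) (h : Bn_le n U U) p1 p2 p3 p4 p5 :
  comp (@del A U T V V p1 p2 p3 p4 p5) (eq_hom (esym (ps_comp Phi h p3 p5 (tl_a A V))))
  = eq_hom (ps_id Phi h (res p3 (tl_a A V))).
Proof. rewrite del_VV eqC; exact: eq_hom_pi. Qed.

Lemma GA_id (U : Bn n) (h : Bn_le n U U) : GA_al h = eq_hom (ps_id Phi h (GA_a U)).
Proof. exact: GA_id_gen. Qed.

Lemma GA_coc_gen (U U' U'' : Bn n) (hUV : Bn_le n U U') (hVW : Bn_le n U' U'') (hUW : Bn_le n U U'')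
  (V1 V2 V3 T12 T23 T13 T0 : J)
  a1 a2 (a3 : Bn_le n U (sval V1)) a4 a5 (q3 : Bn_le n U'' (sval V3)) b1 b2 b4 b5
  (q2 : Bn_le n U' (sval V2)) c1 c2 c4 c5
  (k0 : Bn_le n U (sval T0)) (k12 : Bn_le n (sval T0) (sval T12))
  (k13 : Bn_le n (sval T0) (sval T13)) (k23 : Bn_le n (sval T0) (sval T23)) :
  comp (@del A U T13 V1 V3 a1 a2 a3 a4 a5) (eq_hom (esym (ps_comp Phi hUW q3 a5 (tl_a A V3))))
  = comp (comp (@del A U T12 V1 V2 b1 b2 a3 b4 b5) (eq_hom (esym (ps_comp Phi hUV q2 b5 (tl_a A V2)))))
      (comp (fmap (res hUV) (comp (@del A U' T23 V2 V3 c1 c2 q2 c4 c5)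
                                  (eq_hom (esym (ps_comp Phi hVW q3 c5 (tl_a A V3))))))
            (eq_hom (ps_comp Phi hUV hVW hUW (res q3 (tl_a A V3))))).
Proof.
have t1 : Bn_le n (sval T0) (sval V1) := leT k13 a2.
have t2 : Bn_le n (sval T0) (sval V2) := leT k12 b4.
have t3 : Bn_le n (sval T0) (sval V3) := leT k13 a4.
rewrite fC (del_res' hUV c1 c2 q2 c4 c5 (leT hUV c1) b5 a5).
rewrite -(del_indep A k0 k13 a1 a2 a4 t1 t3 a3 a5).
rewrite -(del_indep A k0 k12 b1 b2 b4 t1 t2 a3 b5).
rewrite -(del_indep A k0 k23 (leT hUV c1) c2 c4 t2 t3 b5 a5).
rewrite -(del_trans A k0 t1 a3 t2 b5 t3 a5).
set d1 := del A k0 t1 a3 t2 b5; set d2 := del A k0 t2 b5 t3 a5.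
rewrite -!cA (cA (eq_hom _) (eq_hom _)) eqC eq_hom_id cL.
congr comp; congr comp.
rewrite fE !eqC; do 3 congr comp; exact: eq_hom_pi.
Qed.

Lemma GA_coc (U V W : Bn n) (hUV : Bn_le n U V) (hVW : Bn_le n V W) (hUW : Bn_le n U W) :
  GA_al hUW = comp (GA_al hUV)
     (comp (fmap (res hUV) (GA_al hVW)) (eq_hom (ps_comp Phi hUV hVW hUW (GA_a W)))).
Proof.
have k0 := sub_JS (xUP U) (notin_le hUV (xUP V)) (notin_le hUW (xUP W)).
have k12 := JS_le (ss3 (xU U) (xU V) (xU W)).
have k23 := JS_le (ss4 (xU U) (xU V) (xU W)).
have k13 := JS_le (ss5 (xU U) (xU V) (xU W)).
exact: (@GA_coc_gen U V W hUV hVW hUW _ _ _ _ _ _ (JS (xU U) (xU V) (xU W))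
   _ _ _ _ _ _ _ _ _ _ _ _ _ _ _ k0 k12 k13 k23).
Qed.

Definition GA : tlim_obj Phi := Build_tlim_obj GA_id GA_coc.
End GA.

Section Ghom.
Variables (A B : tlim_obj (restrict_ps Phi Q)) (g : tlim_hom A B).

Lemma Gg_nat_gen (U U' : Bn n) (h : Bn_le n U U') (T V W : J) p1 p2 p3 p4 p5
   (q : Bn_le n U' (sval W)) :
  comp (fmap (res p3) (th_g g V))
    (comp (@del A U T V W p1 p2 p3 p4 p5) (eq_hom (esym (ps_comp Phi h q p5 (tl_a A W)))))
  = comp (comp (@del B U T V W p1 p2 p3 p4 p5) (eq_hom (esym (ps_comp Phi h q p5 (tl_a B W)))))
      (fmap (res h) (fmap (res q) (th_g g W))).
Proof.
rewrite cA (del_g g) -cA -[RHS]cA; congr comp.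
apply: (eq_hom_swap (ps_gpd HPhi U).1); exact: (ps_comp_hom HPhi).
Qed.

Definition Gg_c (U : Bn n) : hom (GA_a A U) (GA_a B U) := fmap (res (hM U)) (th_g g (MU U)).

Lemma Gg_nat (U U' : Bn n) (h : Bn_le n U U') :
  comp (Gg_c U) (GA_al A h) = comp (GA_al B h) (fmap (res h) (Gg_c U')).
Proof. exact: Gg_nat_gen. Qed.

Definition Gg : tlim_hom (GA A) (GA B) := @Build_tlim_hom _ _ Phi (GA A) (GA B) Gg_c Gg_nat.
End Ghom.

Definition Gfun : Functor (tlim (restrict_ok Q HPhi)) (tlim HPhi) :=
  @Build_Functor (tlim (restrict_ok Q HPhi)) (tlim HPhi) GA Gg.

Lemma Gfun_ok : is_functor Gfun.
Proof.
split.
- move=> A; apply: tlim_hom_eq => U /=; rewrite /Gg_c /=; exact: fI.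
- move=> A B C f g; apply: tlim_hom_eq => U /=; rewrite /Gg_c /=; exact: fC.
Qed.

Lemma eta_nat_gen (A : tlim_obj Phi) (U U' : Bn n) (h : Bn_le n U U') (T V W : J) p1 p2 p3 p4 p5
   (q : Bn_le n U' (sval W)) :
  comp (inv (tl_al A p3)) (tl_al A h)
  = comp (comp (@del (restr_obj Q A) U T V W p1 p2 p3 p4 p5)
               (eq_hom (esym (ps_comp Phi h q p5 (tl_a A (sval W))))))
         (fmap (res h) (inv (tl_al A q))).
Proof.
rewrite del_restr -!cA; congr comp.
rewrite (tl_coc A h q p5) -!cA (cA (eq_hom _)) eqC eq_hom_id cL -fC invR fI cR //.
Qed.

Section Unit.
Variable A : tlim_obj Phi.
Definition eta_c (U : Bn n) : hom (tl_a A U) (GA_a (restr_obj Q A) U) := inv (tl_al A (hM U)).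
Lemma eta_nat (U U' : Bn n) (h : Bn_le n U U') :
  comp (eta_c U) (tl_al A h) = comp (GA_al (restr_obj Q A) h) (fmap (res h) (eta_c U')).
Proof. exact: eta_nat_gen. Qed.
Definition eta : tlim_hom A (GA (restr_obj Q A)) :=
  @Build_tlim_hom _ _ Phi A (GA (restr_obj Q A)) eta_c eta_nat.
End Unit.

Lemma eps_nat_gen (B : tlim_obj (restrict_ps Phi Q)) (V V' : J) (h : Bn_le n (sval V) (sval V'))
   (T W1 W2 : J) p1 p2 p3 p4 p5 (q : Bn_le n (sval V') (sval W2)) :
  comp (tl_al B (p3 : sub_le _ V W1))
    (comp (@del B (sval V) T W1 W2 p1 p2 p3 p4 p5) (eq_hom (esym (ps_comp Phi h q p5 (tl_a B W2)))))
  = comp (tl_al B (h : sub_le _ V V')) (fmap (res h) (tl_al B (q : sub_le _ V' W2))).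
Proof.
have hVV : Bn_le n (sval V) (sval V) := subxx _.
rewrite -(del_indep B hVV p1 p1 p2 p4 p3 p5 p3 p5) del_self cA cA invR cL.
rewrite (tl_coc B (h : sub_le _ V V') (q : sub_le _ V' W2) (p5 : sub_le _ V W2)) /=.
by rewrite -!cA eqC eq_hom_id cR.
Qed.

Section Counit.
Variable B : tlim_obj (restrict_ps Phi Q).
Definition eps_c (V : J) : hom (GA_a B (sval V)) (tl_a B V) :=
  tl_al B (hM (sval V) : sub_le _ V (MU (sval V))).
Lemma eps_nat (V V' : J) (h : sub_le _ V V') :
  comp (eps_c V) (tl_al (restr_obj Q (GA B)) h) = comp (tl_al B h) (fmap (ps_res (restrict_ps Phi Q) h) (eps_c V')).
Proof. exact: eps_nat_gen. Qed.
Definition eps : tlim_hom (restr_obj Q (GA B)) B :=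
  @Build_tlim_hom _ _ (restrict_ps Phi Q) (restr_obj Q (GA B)) B eps_c eps_nat.
End Counit.
End Main.

Theorem corollary5p2 (n : nat) (hn : 3 <= n)
  (Phi : GpdPresheaf (Bn n) (Bn_le n)) (HPhi : is_presheaf Phi) :
  is_equivalence (restrict_functor (Bnk_pred n (n - 3)) HPhi).
Proof.
exists (Gfun HPhi); split; first exact: Gfun_ok.
split.
- exists (fun A => eta HPhi A), (fun A => tinv HPhi (eta HPhi A)); split.
  + move=> A A' f; apply: tlim_hom_eq => U /=.
    rewrite /eta_c /Gg_c /=; apply: invS; exact: th_nat.
  + move=> A; split; apply: tlim_hom_eq => U /=; [exact: ginvL | exact: ginvR].
- exists (fun B => eps HPhi B), (fun B => tinv (restrict_ok _ HPhi) (eps HPhi B)); split.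
  + move=> B B' g; apply: tlim_hom_eq => V /=.
    rewrite /eps_c /Gg_c /=; symmetry; exact: (th_nat g).
  + move=> B; split; apply: tlim_hom_eq => V /=; [exact: ginvL | exact: ginvR].
Qed.
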